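(* Let $(\mathbf{x}, y, a)$ be jointly distributed according to a distribution $P$ with $\mathbf{x}\in\mathbb{R}^d$, $y\in\mathcal{Y}=\{1,\ldots,L\}$ and $a\in\mathcal{A}$, where $|\mathcal{A}|=K$, and assume every group has positive prior, $P(y,a)>0$ for all $(y,a)\in\mathcal{Y}\times\mathcal{A}$. For a scoring function $f:\mathbb{R}^d\to\mathbb{R}^L$ define its group-balanced accuracy $$GBA(f)=\frac{1}{KL}\sum_{(y_0,a_0)\in\mathcal{Y}\times\mathcal{A}} P\Big(y=\arg\max_{y'\in\mathcal{Y}} f_{y'}(\mathbf{x}) \,\Big|\, (y,a)=(y_0,a_0)\Big).$$ Then the classifier that assigns to each input $\mathbf{x}$ the prediction $$\arg\max_{y\in\mathcal{Y}}\sum_{a\in\mathcal{A}}\frac{P(y,a\mid\mathbf{x})}{P(y,a)} \;=\; \arg\max_{y\in\mathcal{Y}}\sum_{a\in\mathcal{A}}\frac{P(y\mid a,\mathbf{x})\,P(a\mid\mathbf{x})}{P(y,a)}$$ maximizes $GBA$; i.e. any $f^\ast$ with $\arg\max_{y}f^\ast_y(\mathbf{x})$ equal to this prediction for every $\mathbf{x}$ satisfies $f^\ast\in\arg\max_f GBA(f)$.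
   Context: $\mathcal{A}$ is the set of values of a (spurious) attribute; a group is a pair $g=(y,a)\in\mathcal{Y}\times\mathcal{A}$. $P(y,a)$ denotes the prior probability of group $(y,a)$ and $P(y,a\mid\mathbf{x})$ the true posterior probability of group $(y,a)$ given $\mathbf{x}$; $P(y\mid a,\mathbf{x})$ and $P(a\mid\mathbf{x})$ are the corresponding conditional probabilities under $P$. *)

(* Defs.v *)
From HB Require Import structures.
From mathcomp Require Import all_boot all_order all_algebra.
From mathcomp Require Import all_classical all_reals all_analysis.
Set Implicit Arguments. Unset Strict Implicit. Unset Printing Implicit Defensive.
Import Order.TTheory GRing.Theory Num.Theory.
Import numFieldNormedType.Exports.
Local Open Scope classical_set_scope.
Local Open Scope ring_scope.

Definition Rd (R : realType) (d : nat) := g_sigma_algebraType (@open 'rV[R]_d).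
HB.instance Definition _ (R : realType) (d : nat) :=
  Measurable.on (g_sigma_algebraType (@open 'rV[R]_d)).
HB.instance Definition _ (R : realType) (d : nat) :=
  Measurable.copy (Rd R d) (g_sigma_algebraType (@open 'rV[R]_d)).

(* Labels Y = {0,...,L}, i.e. L+1 classes (the paper's {1,...,L'} with L' = L+1). *)
Definition argmax (R : realType) (L : nat) (v : 'I_L.+1 -> R) : 'I_L.+1 :=
  [arg max_(i > ord0) v i]%O.

Section GBA.
Variables (R : realType) (dim : nat) (L : nat) (A : finType).
Variable mu : probability (Rd R dim) R.            (* marginal law of x *)
Variable eta : Rd R dim -> ('I_L.+1 * A) -> R.      (* posterior P(y,a | x) *)

Definition prior (g : 'I_L.+1 * A) : R := \int[mu]_x eta x g.

(* P(y = argmax_y' f_y'(x) | (y,a) = g) = P(argmax f(x) = g.1, (y,a) = g) / P(g) *)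
Definition group_acc (f : Rd R dim -> 'I_L.+1 -> R) (g : 'I_L.+1 * A) : R :=
  (\int[mu]_(x in [set x | argmax (f x) = g.1]) eta x g) / prior g.

Definition GBA (f : Rd R dim -> 'I_L.+1 -> R) : R :=
  (#|A| * L.+1)%:R^-1 * \sum_(g : 'I_L.+1 * A) group_acc f g.

Definition bayes_pred (x : Rd R dim) : 'I_L.+1 :=
  argmax (fun y => \sum_(a : A) eta x (y, a) / prior (y, a)).
End GBA.

(* Main.v *)
Require Import Defs.
From HB Require Import structures.
From mathcomp Require Import all_boot all_order all_algebra.
From mathcomp Require Import all_classical all_reals all_analysis.
Import Order.TTheory GRing.Theory Num.Theory.
Import numFieldTopology.Exports numFieldNormedType.Exports.
Local Open Scope classical_set_scope.
Local Open Scope ring_scope.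

Definition Gam {L : nat} (b : {ffun 'I_L.+1 * 'I_L.+1 -> bool}) : 'I_L.+1 :=
  odflt ord0 [pick i | [forall j, b (i, j)]].

Lemma argmaxE (R : realType) L (v : 'I_L.+1 -> R) :
  argmax v = Gam [ffun ij : 'I_L.+1 * 'I_L.+1 => v ij.2 <= v ij.1].
Proof.
rewrite /argmax /Gam /Order.arg_max /extremum; congr odflt; apply: eq_pick => i /=.
apply: eq_forallb => j; rewrite ffunE /=. done.
Qed.

Lemma meas_fin_comp d (T : measurableType d) (K : finType) (h : T -> K)
  (P : K -> bool) :
  (forall k, measurable [set x | h x = k]) -> measurable [set x | P (h x)].
Proof.
move=> mh.
have -> : [set x | P (h x)] = \bigcup_(k in [set k | P k]) [set x | h x = k].
  by apply/seteqP; split=> x /=; [move=> Px; exists (h x) | case=> k /= Pk ->].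
by apply: fin_bigcup_measurable => //; exact: finite_finset.
Qed.

Lemma meas_argmax d (T : measurableType d) (R : realType) L
  (v : T -> 'I_L.+1 -> R) :
  (forall y, measurable_fun setT (fun x => v x y)) ->
  forall y, measurable [set x | argmax (v x) = y].
Proof.
move=> mv y.
set h := fun x => [ffun ij : 'I_L.+1 * 'I_L.+1 => v x ij.2 <= v x ij.1].
have -> : [set x | argmax (v x) = y] = [set x | Gam (h x) == y].
  by apply/seteqP; split=> x /=; rewrite argmaxE => /eqP.
apply: (@meas_fin_comp _ _ _ h (fun b => Gam b == y)) => b.
rewrite /h.
have -> : [set x | [ffun ij : 'I_L.+1 * 'I_L.+1 => v x ij.2 <= v x ij.1] = b] =
  \bigcap_(ij in [set: 'I_L.+1 * 'I_L.+1]) [set x | (v x ij.2 <= v x ij.1) = b ij].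
  apply/seteqP; split=> x /=.
    by move=> <- ij _ /=; rewrite ffunE.
  by move=> H; apply/ffunP => ij; rewrite ffunE; exact: H.
apply: fin_bigcap_measurable => //.
move=> ij _.
have mb : measurable_fun setT (fun x => v x ij.2 <= v x ij.1).
  exact: measurable_realfun.measurable_fun_ler.
have := mb measurableT [set b ij] I; rewrite setTI.
by [].
Qed.

Lemma argmax_ge (R : realType) L (w : 'I_L.+1 -> R) j : w j <= w (argmax w).
Proof. by rewrite /argmax; case: Order.TotalTheory.arg_maxP => //= i _ Hi; exact: Hi. Qed.

Section Main.
Context (R : realType) (dim : nat) (mu : probability (Rd R dim) R).
Local Notation T := (Rd R dim).

Lemma bnd_int (f : T -> R) M : measurable_fun setT f ->
  (forall x, `|f x| <= M) -> mu.-integrable setT (EFin \o f).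
Proof.
move=> mf HM; apply: measurable_bounded_integrable => //.
  first [ by have H1 := probability_setT mu; rewrite H1 ltry | by move: (probability_setT mu) => H1; rewrite [X in (X < _)%E]H1 ltry | exact: (le_lt_trans (probability_le1 mu measurableT) (ltry 1)) | by apply: (@fin_num_fun_lty _ _ _ mu) ].
exists M; split; first exact: num_real.
by move=> N HN x _ /=; apply: le_trans (HM x) (ltW HN).
Qed.

Lemma Rintegral_sum I (s : seq I) (F : I -> T -> R) :
  (forall i, mu.-integrable setT (EFin \o F i)) ->
  \int[mu]_x (\sum_(i <- s) F i x) = \sum_(i <- s) \int[mu]_x F i x.
Proof.
move=> HF; elim: s => [|i s IH].
  rewrite big_nil; transitivity (\int[mu]_x (0:R)).
    by apply: eq_Rintegral => x _; rewrite big_nil.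
  by rewrite /Rintegral integral0.
rewrite big_cons -IH -RintegralD //; last first.
  apply: (@eq_integrable _ _ _ mu _ measurableT (fun x => \sum_(j <- s) (EFin \o F j) x)) => //.
    by move=> x _ /=; rewrite sumEFin.
  by apply: (@integrable_sum _ _ _ mu setT measurableT) => j _; exact: HF.
by apply: eq_Rintegral => x _; rewrite big_cons.
Qed.

Context (L : nat) (A : finType) (eta : T -> ('I_L.+1 * A) -> R)
  (eta_meas : forall g, measurable_fun setT (fun x => eta x g))
  (eta_ge0 : forall x g, 0 <= eta x g)
  (eta_sum1 : forall x, \sum_(g : 'I_L.+1 * A) eta x g = 1)
  (prior_pos : forall g, 0 < prior mu eta g).

Local Notation p := (prior mu eta).

Lemma eta_le1 x g : `|eta x g| <= 1.
Proof.
rewrite ger0_norm // -(eta_sum1 x) (bigD1 g) //= lerDl.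
by apply: sumr_ge0 => i _.
Qed.

Definition kk (a : T -> 'I_L.+1) g x := if a x == g.1 then eta x g / p g else 0.

Lemma kk_patch a g : kk a g = (fun x : T => (eta x g / p g : R)) \_ [set x | a x = g.1].
Proof.
apply/funext => x; rewrite patchE /kk.
have -> : (x \in [set x | a x = g.1]) = (a x == g.1).
  by apply/idP/eqP; rewrite inE.
by [].
Qed.

Lemma meas_div g : measurable_fun setT (fun x => eta x g / p g).
Proof. by apply: measurable_realfun.measurable_funM => //; exact: measurable_cst. Qed.

Lemma kk_int a (ma : forall y, measurable [set x | a x = y]) g :
  mu.-integrable setT (EFin \o kk a g).
Proof.
apply: (@bnd_int (kk a g) (p g)^-1).
  rewrite kk_patch; apply/(measurable_restrictT _ (ma g.1)).
  by apply: (measurable_funS measurableT) => //; exact: meas_div.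
move=> x; rewrite /kk; case: ifP => _; last by rewrite normr0 invr_ge0 ltW.
rewrite normrM [`|(p g)^-1|]gtr0_norm ?invr_gt0 //; apply: ler_piMl; first by rewrite invr_ge0 ltW.
exact: eta_le1.
Qed.

Lemma acc_eq a (ma : forall y, measurable [set x | a x = y]) g :
  (\int[mu]_(x in [set x | a x = g.1]) eta x g) / p g = \int[mu]_x kk a g x.
Proof.
rewrite -RintegralZr //; last first.
  apply: (@integrableS _ _ _ mu setT) => //.
  by apply: (@bnd_int (fun x => eta x g) 1) => // x; exact: eta_le1.
by rewrite Rintegral_mkcond kk_patch.
Qed.

Lemma sum_kk a x : \sum_g kk a g x = \sum_(a0 : A) eta x (a x, a0) / p (a x, a0).
Proof.
transitivity (\sum_(y : 'I_L.+1) \sum_(a0 : A) kk a (y, a0) x).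
  by rewrite pair_bigA; apply: eq_bigr => -[].
rewrite (bigD1 (a x)) //= [X in _ + X]big1 ?addr0.
  by apply: eq_bigr => a0 _; rewrite /kk /= eqxx.
move=> y /negbTE ya; apply: big1 => a0 _; rewrite /kk /= eq_sym.
by rewrite ya.
Qed.

Lemma gba_kk a (ma : forall y, measurable [set x | a x = y]) :
  \sum_g (\int[mu]_(x in [set x | a x = g.1]) eta x g) / p g =
  \int[mu]_x (\sum_g kk a g x).
Proof.
rewrite Rintegral_sum; last by move=> g; exact: kk_int.
by apply: eq_bigr => g _; exact: acc_eq.
Qed.

Lemma int_sum_kk a (ma : forall y, measurable [set x | a x = y]) :
  mu.-integrable setT (EFin \o (fun x => \sum_g kk a g x)).
Proof.
apply: (@eq_integrable _ _ _ mu _ measurableT (fun x => \sum_g (EFin \o kk a g) x)) => //.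
  by move=> x _ /=; rewrite sumEFin.
by apply: (@integrable_sum _ _ _ mu setT measurableT) => g _; exact: kk_int.
Qed.
End Main.

Theorem proposition1 (R : realType) (dim L : nat) (A : finType)
  (mu : probability (Rd R dim) R) (eta : Rd R dim -> ('I_L.+1 * A) -> R)
  (eta_meas : forall g, measurable_fun setT (fun x => eta x g))
  (eta_ge0 : forall x g, 0 <= eta x g)
  (eta_sum1 : forall x, \sum_(g : 'I_L.+1 * A) eta x g = 1)
  (prior_pos : forall g, 0 < prior mu eta g)
  (fstar : Rd R dim -> 'I_L.+1 -> R)
  (fstar_bayes : forall x, argmax (fstar x) = bayes_pred mu eta x) :
  forall f : Rd R dim -> 'I_L.+1 -> R,
    (forall y, measurable_fun setT (fun x => f x y)) ->
    GBA mu eta f <= GBA mu eta fstar.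
Proof.
move=> f mf.
set H := fun x (y : 'I_L.+1) => \sum_(a0 : A) eta x (y, a0) / prior mu eta (y, a0).
have mH : forall y, measurable_fun setT (fun x => H x y).
  move=> y; apply: measurable_sum => a0.
  exact: (@meas_div R dim mu L A eta eta_meas (y, a0)).
have maf := @meas_argmax _ _ _ _ f mf.
have mab : forall y, measurable [set x | bayes_pred mu eta x = y].
  exact: (@meas_argmax _ _ _ _ H mH).
rewrite /GBA; apply: ler_wpM2l; first by rewrite invr_ge0.
have -> : \sum_g group_acc mu eta fstar g =
    \sum_g (\int[mu]_(x in [set x | bayes_pred mu eta x = g.1]) eta x g) / prior mu eta g.
  apply: eq_bigr => g _; rewrite /group_acc.
  have -> : [set x | argmax (fstar x) = g.1] = [set x | bayes_pred mu eta x = g.1].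
    by apply/seteqP; split=> x /=; rewrite fstar_bayes.
  by [].
rewrite /group_acc (@gba_kk R dim mu L A eta eta_meas eta_ge0 eta_sum1 prior_pos _ maf) (@gba_kk R dim mu L A eta eta_meas eta_ge0 eta_sum1 prior_pos _ mab).
apply: le_Rintegral => //.
- exact: (@int_sum_kk R dim mu L A eta eta_meas eta_ge0 eta_sum1 prior_pos _ maf).
- exact: (@int_sum_kk R dim mu L A eta eta_meas eta_ge0 eta_sum1 prior_pos _ mab).
move=> x _; rewrite !sum_kk.
exact: (@argmax_ge R L (H x) (argmax (f x))).
Qed.
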